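(* Let $m\ge1$ and for $p_1,\dots,p_m\ge0$ let $K_{p_1,\dots,p_m}$ be the complete $m$-partite graph with parts of sizes $p_1,\dots,p_m$ (two vertices adjacent iff they lie in different parts). Then $$\sum_{p_1,\dots,p_m\ge0}\mathrm{sa}(K_{p_1,\dots,p_m};t)\,\frac{x_1^{p_1}}{p_1!}\cdots\frac{x_m^{p_m}}{p_m!} = e^{t(x_1+\cdots+x_m)}\,\frac{(1-m)+\cosh x_1+\cdots+\cosh x_m}{\cosh(x_1+\cdots+x_m)}.$$
   Context: All graphs are finite, simple and undirected. For a graph $G=(V,E)$ and $V'\subseteq V$, $G|_{V'}$ denotes the induced subgraph on $V'$. The signed a-number $\mathrm{sa}(G)$ is defined recursively: $\mathrm{sa}(G)=1$ if $G$ is the empty graph (no vertices); $\mathrm{sa}(G)=0$ if $G$ has a connected component with an odd number of vertices; otherwise $\mathrm{sa}(G)=-\sum_{V'\subsetneq V}\mathrm{sa}(G|_{V'})$. The signed a-polynomial of $G$ is $\mathrm{sa}(G;t)=\sum_{V'\subseteq V}\mathrm{sa}(G|_{V'})\,t^{|V\setminus V'|}$. *)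

(* Defs.v *)
From HB Require Import structures.
From mathcomp Require Import all_boot all_order all_algebra.
Set Implicit Arguments. Unset Strict Implicit. Unset Printing Implicit Defensive.
Import Order.TTheory GRing.Theory Num.Theory.
Local Open Scope ring_scope.

(* A finite simple graph is a vertex finType T with an adjacency relation e.
   Subsets S : {set T} stand for induced subgraphs G|_S. *)
Section SignedA.
Variables (T : finType) (e : rel T).

Definition restr (S : {set T}) : rel T := [rel x y | [&& x \in S, y \in S & e x y]].

Definition comp (S : {set T}) (x : T) : {set T} := [set y | connect (restr S) x y].

Definition has_odd_comp (S : {set T}) : bool := [exists x in S, odd #|comp S x|].

(* recursion with fuel; sa_rec n S is the signed a-number of G|_S whenever n >= #|S| *)
Fixpoint sa_rec (n : nat) (S : {set T}) : int :=
  match n with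
  | 0 => if S == set0 then 1 else 0
  | n.+1 => if S == set0 then 1
            else if has_odd_comp S then 0
            else - \sum_(S' : {set T} | S' \proper S) sa_rec n S'
  end.

Definition sa (S : {set T}) : int := sa_rec #|S| S.

Definition sa_poly : {poly rat} :=
  \sum_(S : {set T}) (sa S)%:~R *: 'X^(#|T| - #|S|)%N.
End SignedA.

(* complete m-partite graph K_{p_1,...,p_m}: vertices are pairs (i, k), k < p_i,
   adjacent iff they lie in different parts *)
Definition Kvert (m : nat) (p : {ffun 'I_m -> nat}) := {i : 'I_m & 'I_(p i)}.
Definition Kedge (m : nat) (p : {ffun 'I_m -> nat}) : rel (Kvert p) :=
  fun x y => tag x != tag y.

(* A multi-index p = (p_1,...,p_m); a series is its coefficient function
   (coefficient of x_1^{p_1}...x_m^{p_m}). *)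
Definition mi (m : nat) := {ffun 'I_m -> nat}.
Definition mdeg m (p : mi m) : nat := (\sum_i p i)%N.
Definition mi0 m : mi m := [ffun _ => 0%N].
Definition misub m (p q : mi m) : mi m := [ffun i => (p i - q i)%N].
Definition lowr m n (q : {ffun 'I_m -> 'I_n}) : mi m := [ffun i => nat_of_ord (q i)].

Definition fps_mul (R : pzRingType) m (f g : mi m -> R) : mi m -> R :=
  fun p => \sum_(q : {ffun 'I_m -> 'I_(mdeg p).+1} | [forall i, (q i <= p i)%N])
             f (lowr q) * g (misub p (lowr q)).

(* one step of the recursive computation of the inverse of f (f_0 a unit):
   g_p = f_0^{-1} ([p = 0] - sum_{0 < q <= p} f_q g_{p-q}) *)
Definition inv_step (R : unitRingType) m (f g : mi m -> R) : mi m -> R :=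
  fun p => (f (mi0 m))^-1 *
    ((p == mi0 m)%:R -
     \sum_(q : {ffun 'I_m -> 'I_(mdeg p).+1} |
             [forall i, (q i <= p i)%N] && (lowr q != mi0 m))
        f (lowr q) * g (misub p (lowr q))).

(* multiplicative inverse of a series (coefficients of total degree d are
   determined after d+1 steps) *)
Definition fps_inv (R : unitRingType) m (f : mi m -> R) : mi m -> R :=
  fun p => iter (mdeg p).+1 (inv_step f) (fun _ => 0) p.

Definition fps_const (R : pzRingType) m (c : R) : mi m -> R :=
  fun p => if p == mi0 m then c else 0.

Definition fact_inv m (p : mi m) : rat := ((\prod_i (p i)`!)%N%:R)^-1.

(* e^{t(x_1+...+x_m)} = sum_p t^{|p|} x^p / p!   (t is the polynomial variable 'X) *)
Definition exp_tX m : mi m -> {poly rat} := fun p => fact_inv p *: 'X^(mdeg p).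

Definition cosh_var m (i : 'I_m) : mi m -> {poly rat} :=
  fun p => if [forall j, (j != i) ==> (p j == 0%N)] && ~~ odd (p i)
           then (fact_inv p)%:P else 0.

(* cosh(x_1+...+x_m) = sum_n X^n/n! [n even], X^n/n! = sum_{|p|=n} x^p/p! *)
Definition cosh_sum m : mi m -> {poly rat} :=
  fun p => if ~~ odd (mdeg p) then (fact_inv p)%:P else 0.

Definition numer m : mi m -> {poly rat} :=
  fun p => fps_const (((1 - m%:R) : rat)%:P) p + \sum_i cosh_var i p.

Definition rhs m : mi m -> {poly rat} :=
  fps_mul (fps_mul (@exp_tX m) (@numer m)) (fps_inv (@cosh_sum m)).

Definition lhs m : mi m -> {poly rat} :=
  fun p => fact_inv p *: sa_poly (@Kedge m p).

(* Main.v *)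
Require Import Defs.
From HB Require Import structures.
From mathcomp Require Import all_boot all_order all_algebra.
From mathcomp Require Import zify ring.
Set Implicit Arguments. Unset Strict Implicit. Unset Printing Implicit Defensive.
Import Order.TTheory GRing.Theory Num.Theory.
Local Open Scope ring_scope.


Section MI.
Variable m : nat.
Implicit Types (p q r s x y : mi m).

Definition mle r p := [forall i, (r i <= p i)%N].
Definition madd r s : mi m := [ffun i => (r i + s i)%N].
Definition tord n x : {ffun 'I_m -> 'I_n.+1} := [ffun i => inord (x i)].
Definition bnd n x := [forall i, (x i <= n)%N].

Lemma lowrE n (q : {ffun 'I_m -> 'I_n}) i : lowr q i = q i.
Proof. by rewrite ffunE. Qed.

Lemma lowr_tord n x : bnd n x -> lowr (tord n x) = x.
Proof.
move=> /forallP b; apply/ffunP=> i; rewrite !ffunE inordK //; exact: b.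
Qed.

Lemma tord_lowr n (q : {ffun 'I_m -> 'I_n.+1}) : tord n (lowr q) = q.
Proof. by apply/ffunP=> i; rewrite !ffunE inord_val. Qed.

Lemma bnd_lowr n (q : {ffun 'I_m -> 'I_n.+1}) : bnd n (lowr q).
Proof. by apply/forallP=> i; rewrite ffunE -ltnS. Qed.

Lemma lowr_inj n : injective (@lowr m n).
Proof.
move=> q1 q2 e; apply/ffunP=> i; apply/val_inj.
by have := congr1 (fun f : mi m => f i) e; rewrite !ffunE.
Qed.

Definition msumP (R : zmodType) n (P : pred (mi m)) (F : mi m -> R) :=
  \sum_(q : {ffun 'I_m -> 'I_n.+1} | P (lowr q)) F (lowr q).

Lemma msumP_bij (R : zmodType) n n' (P Q : pred (mi m)) (phi psi : mi m -> mi m)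
   (F : mi m -> R) :
  (forall x, P x -> bnd n x) -> (forall y, Q y -> bnd n' y) ->
  (forall x, P x -> Q (phi x)) -> (forall y, Q y -> P (psi y)) ->
  (forall x, P x -> psi (phi x) = x) -> (forall y, Q y -> phi (psi y) = y) ->
  msumP n P (fun x => F (phi x)) = msumP n' Q F.
Proof.
move=> bP bQ PQ QP psiK phiK; rewrite /msumP.
pose h (q : {ffun 'I_m -> 'I_n.+1}) := tord n' (phi (lowr q)).
pose h' (q : {ffun 'I_m -> 'I_n'.+1}) := tord n (psi (lowr q)).
rewrite (reindex_onto h h') /=; last first.
  move=> q Qq; rewrite /h /h' lowr_tord; last exact/bP/QP.
  by rewrite phiK // tord_lowr.
apply: eq_big => q.
  apply/idP/idP.
    move=> Pq; rewrite /h lowr_tord; last exact/bQ/PQ.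
    rewrite PQ //= /h' lowr_tord; last exact/bQ/PQ.
    by rewrite psiK // tord_lowr.
  move=> /andP[Qh /eqP hh]; rewrite -hh /h' lowr_tord; first exact: QP.
  exact/bP/QP.
by move=> Pq; rewrite /h lowr_tord //; exact/bQ/PQ.
Qed.

Lemma mleP r p : reflect (forall i, (r i <= p i)%N) (mle r p).
Proof. exact: forallP. Qed.

Lemma bndP n x : reflect (forall i, (x i <= n)%N) (bnd n x).
Proof. exact: forallP. Qed.

Lemma mle_trans r q p : mle r q -> mle q p -> mle r p.
Proof. by move=> /mleP a /mleP b; apply/mleP=> i; exact: leq_trans (a i) (b i). Qed.

Lemma bnd_mle n x p : mle x p -> bnd n p -> bnd n x.
Proof. by move=> /mleP a /bndP b; apply/bndP=> i; exact: leq_trans (a i) (b i). Qed.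

Lemma bnd_mdeg p : bnd (mdeg p) p.
Proof. by apply/bndP=> i; rewrite /mdeg (bigD1 i) //= leq_addr. Qed.

Lemma misubE p q i : misub p q i = (p i - q i)%N.
Proof. by rewrite ffunE. Qed.
Lemma maddE p q i : madd p q i = (p i + q i)%N.
Proof. by rewrite ffunE. Qed.

Lemma mdeg_misub p q : mle q p -> (mdeg (misub p q) + mdeg q)%N = mdeg p.
Proof.
move=> /mleP le; rewrite /mdeg -big_split /=; apply: eq_bigr => i _.
by rewrite misubE subnK.
Qed.

Lemma mdeg0 : mdeg (mi0 m) = 0%N.
Proof. by rewrite /mdeg big1 // => i _; rewrite ffunE. Qed.

Lemma mdeg_eq0 p : (mdeg p == 0%N) = (p == mi0 m).
Proof.
apply/idP/eqP=> [|->]; last by rewrite mdeg0.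
rewrite /mdeg sum_nat_eq0 => /forallP h; apply/ffunP=> i; rewrite ffunE.
by apply/eqP; have := h i; rewrite implyTb.
Qed.

Lemma msum_widen (R : zmodType) n n' p (F : mi m -> R) :
  bnd n p -> bnd n' p -> msumP n (mle^~ p) F = msumP n' (mle^~ p) F.
Proof.
move=> bp bp'; apply: (@msumP_bij R n n' (mle^~ p) (mle^~ p) id id F) => //.
- by move=> x xp; exact: bnd_mle xp bp.
- by move=> x xp; exact: bnd_mle xp bp'.
Qed.

Lemma fubini (R : zmodType) n p (G : mi m -> mi m -> R) : bnd n p ->
  msumP n (mle^~ p) (fun q => msumP n (mle^~ q) (fun r => G r q)) =
  msumP n (mle^~ p) (fun r => msumP n (mle^~ (misub p r)) (fun s => G r (madd r s))).
Proof.
move=> bp; rewrite /msumP.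
rewrite (exchange_big_dep (fun r : {ffun 'I_m -> 'I_n.+1} => mle (lowr r) p)) /=;
  last by move=> q r qp rq; exact: mle_trans rq qp.
apply: eq_bigr => r rp; symmetry.
have := @msumP_bij R n n (mle^~ (misub p (lowr r)))
   (fun q => mle q p && mle (lowr r) q) (madd (lowr r)) (fun x => misub x (lowr r))
   (fun q => G (lowr r) q); rewrite /msumP => ->.
- by apply: eq_bigl => q.
- move=> x /mleP xp; apply/bndP=> i; apply: leq_trans (xp i) _.
  by rewrite misubE; apply: leq_trans (leq_subr _ _) _; exact/bndP.
- by move=> y /andP[yp _]; exact: bnd_mle yp bp.
- move=> x /mleP xp; apply/andP; split; apply/mleP=> i; rewrite maddE.
    by have := xp i; rewrite misubE; move/mleP: rp => /(_ i); lia.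
  exact: leq_addr.
- move=> y /andP[/mleP yp /mleP ry]; apply/mleP=> i; rewrite !misubE.
  by have := yp i; have := ry i; lia.
- move=> x _; apply/ffunP=> i; by rewrite misubE maddE addKn.
- move=> y /andP[_ /mleP ry]; apply/ffunP=> i; rewrite maddE misubE.
  by rewrite subnKC // ry.
Qed.

End MI.
Arguments mle {m}.
Arguments madd {m}.
Arguments bnd {m}.
Arguments msumP {m R}.

Section FPS.
Variable m : nat.
Implicit Types (p q r s x y : mi m).

Lemma eq_msum (R : zmodType) n (P : pred (mi m)) (F G : mi m -> R) :
  (forall x, P x -> F x = G x) -> msumP n P F = msumP n P G.
Proof. by move=> e; apply: eq_bigr => q Pq; exact: e. Qed.

Lemma msum_mull (R : pzRingType) n (P : pred (mi m)) (F : mi m -> R) c :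
  msumP n P F * c = msumP n P (fun x => F x * c).
Proof. by rewrite /msumP big_distrl. Qed.

Lemma msum_mulr (R : pzRingType) n (P : pred (mi m)) (F : mi m -> R) c :
  c * msumP n P F = msumP n P (fun x => c * F x).
Proof. by rewrite /msumP big_distrr. Qed.

Lemma fps_mulE (R : pzRingType) (f g : mi m -> R) p :
  fps_mul f g p = msumP (mdeg p) (mle^~ p) (fun q => f q * g (misub p q)).
Proof. by apply: eq_bigl => q; apply: eq_forallb => i; rewrite ffunE. Qed.

Lemma fps_mulA (R : pzRingType) (f g h : mi m -> R) p :
  fps_mul (fps_mul f g) h p = fps_mul f (fps_mul g h) p.
Proof.
rewrite !fps_mulE.
have bp := bnd_mdeg p.
transitivity (msumP (mdeg p) (mle^~ p) (fun q => msumP (mdeg p) (mle^~ q)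
   (fun r => f r * g (misub q r) * h (misub p q)))).
  apply: eq_msum => q qp; rewrite fps_mulE msum_mull.
  rewrite (@msum_widen _ _ _ (mdeg p)) //; [exact: bnd_mdeg | exact: bnd_mle qp bp].
rewrite fubini //; apply: eq_msum => r rp.
rewrite fps_mulE msum_mulr (@msum_widen _ _ _ (mdeg p)); first last.
- apply/bndP=> i; rewrite misubE; apply: leq_trans (leq_subr _ _) _; exact/bndP.
- exact: bnd_mdeg.
apply: eq_msum => s sp; rewrite mulrA; congr (_ * g _ * h _); apply/ffunP=> i.
  by rewrite misubE maddE addKn.
by rewrite !misubE maddE subnDA.
Qed.

Lemma misub_eq0 p q : mle q p -> (misub p q == mi0 m) = (q == p).
Proof.
move=> /mleP qp; apply/eqP/eqP=> [e|->].
  apply/ffunP=> i; apply/eqP; rewrite eqn_leq qp /=.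
  by have := congr1 (fun f : mi m => f i) e; rewrite misubE ffunE => /eqP; rewrite subn_eq0.
by apply/ffunP=> i; rewrite misubE ffunE subnn.
Qed.

Lemma mle_refl p : mle p p.
Proof. by apply/mleP. Qed.

Lemma mle0 p : mle (mi0 m) p.
Proof. by apply/mleP=> i; rewrite ffunE. Qed.

Lemma fps_mul1 (R : pzRingType) (f : mi m -> R) p :
  fps_mul f (fps_const 1) p = f p.
Proof.
rewrite fps_mulE /msumP (bigD1 (tord (mdeg p) p)) /=; last first.
  by rewrite lowr_tord ?mle_refl // bnd_mdeg.
rewrite lowr_tord ?bnd_mdeg // /fps_const misub_eq0 ?mle_refl // eqxx mulr1.
rewrite big1 ?addr0 // => q /andP[qp qne].
rewrite misub_eq0 //; case: eqP => e; last by rewrite mulr0.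
by move: qne; rewrite -[X in tord _ X]e tord_lowr eqxx.
Qed.

Definition gk (R : unitRingType) (f : mi m -> R) k := iter k (inv_step f) (fun _ => 0).

Lemma mdeg_lt p q : mle q p -> q != mi0 m -> (mdeg (misub p q) < mdeg p)%N.
Proof.
move=> qp qn; rewrite -(mdeg_misub qp) -{1}[mdeg (misub p q)]addn0 ltn_add2l.
by rewrite lt0n mdeg_eq0.
Qed.

Lemma gk_fuel (R : unitRingType) (f : mi m -> R) k k' q :
  (mdeg q < k)%N -> (mdeg q < k')%N -> gk f k q = gk f k' q.
Proof.
elim: k k' q => [|k IH] [|k'] q //= hk hk'.
rewrite /inv_step; congr (_ * (_ - _)); apply: eq_bigr => r /andP[rq rn].
have lt : (mdeg (misub q (lowr r)) < mdeg q)%N.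
  by apply: mdeg_lt => //; apply/mleP=> i; rewrite ffunE; exact: (forallP rq i).
by congr (_ * _); apply: IH; [exact: leq_trans lt hk | exact: leq_trans lt hk'].
Qed.

Lemma fps_invE (R : unitRingType) (f : mi m -> R) p :
  fps_inv f p = (f (mi0 m))^-1 * ((p == mi0 m)%:R -
     \sum_(q : {ffun 'I_m -> 'I_(mdeg p).+1} |
             [forall i, (q i <= p i)%N] && (lowr q != mi0 m))
        f (lowr q) * fps_inv f (misub p (lowr q))).
Proof.
rewrite {1}/fps_inv iterS -/(gk f _) /inv_step.
congr (_ * (_ - _)); apply: eq_bigr => q /andP[qp qn].
have lt : (mdeg (misub p (lowr q)) < mdeg p)%N.
  by apply: mdeg_lt => //; apply/mleP=> i; rewrite ffunE; exact: (forallP qp i).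
by congr (_ * _); rewrite /fps_inv -/(gk f _); apply: gk_fuel.
Qed.

Lemma fps_invP (R : unitRingType) (f : mi m -> R) p :
  f (mi0 m) = 1 -> fps_mul f (fps_inv f) p = fps_const 1 p.
Proof.
move=> f0; rewrite /fps_mul (bigD1 (tord (mdeg p) (mi0 m))) /=; last first.
  by apply/forallP=> i; rewrite ffunE inordK ?ffunE // ltnS; exact/bndP/bnd_mle/bnd_mdeg/mle0.
have l0 : lowr (tord (mdeg p) (mi0 m)) = mi0 m.
  by rewrite lowr_tord //; exact/bnd_mle/bnd_mdeg/mle0.
rewrite l0 f0 mul1r.
have -> : misub p (mi0 m) = p by apply/ffunP=> i; rewrite misubE ffunE subn0.
rewrite fps_invE f0 invr1 mul1r /fps_const.
have -> : \sum_(i : {ffun 'I_m -> 'I_(mdeg p).+1} | [forall i0, (i i0 <= p i0)%N] &&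
     (i != tord (mdeg p) (mi0 m))) f (lowr i) * fps_inv f (misub p (lowr i)) =
  \sum_(q : {ffun 'I_m -> 'I_(mdeg p).+1} |
             [forall i, (q i <= p i)%N] && (lowr q != mi0 m))
        f (lowr q) * fps_inv f (misub p (lowr q)).
  by apply: eq_bigl => q; rewrite -[in RHS]l0 (inj_eq (@lowr_inj _ _)).
by rewrite addrC subrKC; case: (p == mi0 m).
Qed.

End FPS.


Section Graph.
Variables (m : nat) (p : mi m).
Local Notation T := (Kvert p).
Implicit Types (S : {set T}).

Definition vtx (i : 'I_m) (k : 'I_(p i)) : T := Tagged (fun i => 'I_(p i)) k.
Definition part S (i : 'I_m) : {set 'I_(p i)} := [set k | vtx k \in S].
Definition sizes S : mi m := [ffun i => #|part S i|].

Lemma vtx_eta (x : T) : vtx (tagged x) = x.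
Proof. by case: x. Qed.

Lemma card_sizes S : #|S| = mdeg (sizes S).
Proof.
rewrite /mdeg /sizes -sum1_card.
rewrite (eq_bigr (fun i => \sum_(k in part S i) 1)%N); last first.
  by move=> i _; rewrite ffunE sum1_card.
rewrite sig_big_dep /=.
by apply: eq_bigl => x; rewrite inE vtx_eta.
Qed.

Lemma sizes_eq0 S : (sizes S == mi0 m) = (S == set0).
Proof. by rewrite -mdeg_eq0 -card_sizes cards_eq0. Qed.

Lemma sizes_setT : sizes [set: T] = p.
Proof.
by apply/ffunP=> i; rewrite ffunE; rewrite (eq_card (B := predT)) ?card_ord // => k; rewrite !inE.
Qed.

Definition oddc (q : mi m) := (#|[set i | q i != 0%N]| <= 1)%N || odd (mdeg q).

Lemma restrE S x y : restr (@Kedge m p) S x y = [&& x \in S, y \in S & tag x != tag y].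
Proof. by []. Qed.

Lemma supp_sizes S i : (sizes S i != 0%N) = [exists x in S, tag x == i].
Proof.
rewrite ffunE -lt0n card_gt0; apply/set0Pn/existsP=> [[k]|[x /andP[xS /eqP ti]]].
  by rewrite inE => kS; exists (vtx k); rewrite kS /=.
by subst i; exists (tagged x); rewrite inE vtx_eta.
Qed.

Lemma comp_sub S u v : u \in S -> v \in Defs.comp (@Kedge m p) S u -> v \in S.
Proof.
move=> uS; rewrite inE => c.
have cl : closed (restr (@Kedge m p) S) S.
  by move=> x y; rewrite restrE => /and3P[-> -> _].
by rewrite -(closed_connect cl c).
Qed.

Lemma odd_compP S : S != set0 -> has_odd_comp (@Kedge m p) S = oddc (sizes S).
Proof.
move=> Sn; rewrite /has_odd_comp /oddc.
case: (boolP [exists x in S, exists y in S, tag x != tag y]).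
  move=> /existsP[x /andP[xS /existsP[y /andP[yS txy]]]].
  have compS u : u \in S -> Defs.comp (@Kedge m p) S u = S.
    move=> uS; apply/setP=> v; apply/idP/idP; first exact: comp_sub.
    move=> vS; rewrite inE.
    case: (boolP (tag u == tag v)) => [/eqP tuv|tuv]; last by apply: connect1; rewrite restrE uS vS.
    have [w wS tw] : exists2 w, w \in S & tag u != tag w.
      case: (boolP (tag u == tag x)) => [/eqP tux|tux]; last by exists x.
      by exists y => //; rewrite tux.
    apply: (@connect_trans _ _ w); apply: connect1; first by rewrite restrE uS wS.
    by rewrite restrE wS vS -tuv eq_sym.
  have -> : [exists x0 in S, odd #|Defs.comp (@Kedge m p) S x0|] = odd #|S|.
    apply/existsP/idP=> [[u /andP[uS]]|oS]; first by rewrite compS.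
    by exists x; rewrite xS compS.
  suff -> : (#|[set i | sizes S i != 0%N]| <= 1)%N = false by rewrite card_sizes.
  apply/negbTE; rewrite -ltnNge.
  have sub : [set tag x; tag y] \subset [set i | sizes S i != 0%N].
    apply/subsetP=> i; rewrite !inE supp_sizes => /orP[] /eqP ->; apply/existsP.
      by exists x; rewrite xS eqxx.
    by exists y; rewrite yS eqxx.
  by have := subset_leq_card sub; rewrite cards2 txy.
rewrite negb_exists => /forallP allS.
have same x y : x \in S -> y \in S -> tag x = tag y.
  move=> xS yS; have := allS x; rewrite xS /= negb_exists => /forallP /(_ y).
  by rewrite yS /= negbK => /eqP.
have [u uS] := set0Pn _ Sn.
have -> : [exists x0 in S, odd #|Defs.comp (@Kedge m p) S x0|].
  apply/existsP; exists u; rewrite uS /=.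
  suff -> : Defs.comp (@Kedge m p) S u = [set u] by rewrite cards1.
  apply/setP=> v; rewrite !inE; apply/idP/idP => [|/eqP ->]; last exact: connect0.
  move=> /connectP[[|w s] /= pth ->] //.
  by move: pth => /andP[]; rewrite restrE => /and3P[_ wS]; rewrite (same u w) ?eqxx.
suff -> : (#|[set i | sizes S i != 0%N]| <= 1)%N by [].
rewrite -(cards1 (tag u)); apply: subset_leq_card; apply/subsetP=> i.
rewrite !inE supp_sizes => /existsP[x /andP[xS /eqP <-]].
by rewrite (same x u).
Qed.

Definition binom (s r : mi m) : nat := (\prod_i 'C(s i, r i))%N.

Definition phiS S : {dffun forall i : 'I_m, {set 'I_(p i)}} := [ffun i => part S i].
Definition psiS (f : {dffun forall i : 'I_m, {set 'I_(p i)}}) : {set T} :=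
  [set x : T | tagged x \in f (tag x)].

Lemma phiS_inj : injective phiS.
Proof.
move=> S1 S2 e; apply/setP=> x.
have := congr1 (fun f : {dffun forall i : 'I_m, {set 'I_(p i)}} => f (tag x)) e.
by rewrite /phiS !ffunE => /setP /(_ (tagged x)); rewrite !inE vtx_eta.
Qed.

Lemma phiSK f : phiS (psiS f) = f.
Proof. by apply/ffunP=> i; rewrite ffunE; apply/setP=> k; rewrite !inE. Qed.

Lemma count_sub S r :
  #|[set S' : {set T} | (S' \subset S) && (sizes S' == r)]| = binom (sizes S) r.
Proof.
pose F := fun i : 'I_m => [pred B : {set 'I_(p i)} | (B \subset part S i) && (#|B| == r i)].
rewrite -(card_imset _ phiS_inj).
have -> : phiS @: [set S' : {set T} | (S' \subset S) && (sizes S' == r)] =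
          [set f : {dffun forall i : 'I_m, {set 'I_(p i)}} | f \in family F].
  apply/setP=> f; rewrite inE; apply/imsetP/familyP.
    move=> [S' /[!inE] /andP[sub /eqP sz] ->] i; rewrite /phiS ffunE inE.
    rewrite -sz ffunE eqxx andbT; apply/subsetP=> k; rewrite !inE.
    exact: (subsetP sub).
  move=> fF; exists (psiS f); last by rewrite phiSK.
  rewrite inE; apply/andP; split.
    apply/subsetP=> x; rewrite inE => xf.
    have := fF (tag x); rewrite inE => /andP[/subsetP /(_ _ xf)].
    by rewrite inE vtx_eta.
  apply/eqP/ffunP=> i; rewrite ffunE.
  have := fF i; rewrite inE => /andP[_ /eqP <-].
  by apply: eq_card => k; rewrite !inE.
rewrite cardsE card_family foldrE big_map big_enum /binom /=.
apply: eq_bigr => i _; rewrite ffunE -cards_draws.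
by apply: eq_card => B; rewrite !inE.
Qed.

Lemma sizes_sub S' S : S' \subset S -> mle (sizes S') (sizes S).
Proof.
move=> sub; apply/mleP=> i; rewrite !ffunE; apply: subset_leq_card.
by apply/subsetP=> k; rewrite !inE; exact: (subsetP sub).
Qed.

Lemma CL (R : zmodType) S (G : mi m -> R) :
  \sum_(S' : {set T} | S' \subset S) G (sizes S') =
  msumP (mdeg (sizes S)) (fun r => mle r (sizes S)) (fun r => G r *+ binom (sizes S) r).
Proof.
set s := sizes S; set n := mdeg s.
have bs : bnd n s by exact: bnd_mdeg.
have bS S' : S' \subset S -> bnd n (sizes S') by move=> sub; exact: bnd_mle (sizes_sub sub) bs.
rewrite (partition_big (fun S' => tord n (sizes S')) (fun q => mle (lowr q) s)); last first.
  by move=> S' sub; rewrite lowr_tord ?sizes_sub //; exact: bS.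
apply: eq_bigr => q qs.
rewrite (eq_bigl (fun S' => S' \in [set S' : {set T} | (S' \subset S) && (sizes S' == lowr q)])); last first.
  move=> S'; rewrite inE; case: (boolP (S' \subset S)) => //= sub.
  apply/eqP/eqP=> [<-|->]; first by rewrite lowr_tord //; exact: bS.
  by rewrite tord_lowr.
rewrite (eq_bigr (fun _ => G (lowr q))); last by move=> S'; rewrite inE => /andP[_ /eqP ->].
by rewrite sumr_const count_sub.
Qed.

End Graph.

Section ARec.
Variable m : nat.

Fixpoint arec (n : nat) (q : mi m) : int :=
  match n with
  | 0 => (q == mi0 m)%:R
  | n'.+1 => if q == mi0 m then 1 else if oddc q then 0
             else - msumP (mdeg q) (fun r => mle r q && (r != q))
                      (fun r => arec n' r *+ binom q r)
  end.

Definition acoef (q : mi m) : int := arec (mdeg q) q.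

Lemma sa_arec (p : mi m) n (S : {set Kvert p}) : sa_rec (@Kedge m p) n S = arec n (sizes S).
Proof.
elim: n S => [|n IH] S /=; first by rewrite sizes_eq0; case: (S == set0).
rewrite sizes_eq0; case: (boolP (S == set0)) => // Sn.
rewrite odd_compP //; case: (oddc (sizes S)) => //; congr (- _).
under eq_bigr do rewrite IH.
set s := sizes S.
pose G r := if r == s then 0 else arec n r.
transitivity (\sum_(S' : {set Kvert p} | S' \subset S) G (sizes S')).
  rewrite big_mkcond [RHS]big_mkcond; apply: eq_bigr => S' _.
  rewrite properE; case: (boolP (S' \subset S)) => //= sub.
  rewrite /G; case: (boolP (sizes S' == s)) => [/eqP e|ne].
    suff -> : S \subset S' by [].
    have : S' == S by rewrite eqEcard sub !card_sizes e /=.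
    by move/eqP ->.
  case: (boolP (S \subset S')) => // sub2.
  have e : S' = S by apply/eqP; rewrite eqEsubset sub sub2.
  by move: ne; rewrite e /s eqxx.
rewrite (CL S G) /msumP big_mkcond [RHS]big_mkcond; apply: eq_bigr => q _.
rewrite /G; case: (mle (lowr q) s) => //=; case: eqP => //=.
by rewrite mul0rn.
Qed.

Lemma sa_acoef (p : mi m) (S : {set Kvert p}) : sa (@Kedge m p) S = acoef (sizes S).
Proof. by rewrite /sa sa_arec /acoef card_sizes. Qed.

End ARec.


Section ACoef.
Variable m : nat.
Implicit Types (p q r s : mi m).

Lemma mdeg_lt2 r q : mle r q -> r != q -> (mdeg r < mdeg q)%N.
Proof.
move=> rq rn; rewrite -(mdeg_misub rq) -{1}[mdeg r]add0n ltn_add2r lt0n mdeg_eq0.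
by rewrite misub_eq0.
Qed.

Lemma arec_fuel n n' r : (mdeg r <= n)%N -> (mdeg r <= n')%N -> arec n r = arec n' r.
Proof.
elim: n n' r => [|n IH] [|n'] r //= h h'.
- by move: h; rewrite leqn0 mdeg_eq0 => ->.
- by move: h'; rewrite leqn0 mdeg_eq0 => ->.
case: (r == mi0 m) => //; case: (oddc r) => //; congr (- _).
apply: eq_msum => x /andP[xr xn]; congr (_ *+ _).
have lt := mdeg_lt2 xr xn.
by apply: IH; rewrite -ltnS; apply: leq_trans lt _.
Qed.

Lemma acoef0 : acoef (mi0 m) = 1.
Proof. by rewrite /acoef mdeg0 /= eqxx. Qed.

Lemma acoef_odd q : q != mi0 m -> oddc q -> acoef q = 0.
Proof.
move=> qn oq; rewrite /acoef; case E: (mdeg q) => [|k].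
  by move: qn; rewrite -mdeg_eq0 E.
by rewrite /= (negbTE qn) oq.
Qed.

Lemma binom_refl q : binom q q = 1%N.
Proof. by rewrite /binom big1 // => i _; rewrite binn. Qed.

Lemma binom0 q : binom q (mi0 m) = 1%N.
Proof. by rewrite /binom big1 // => i _; rewrite ffunE bin0. Qed.

Definition Bsum p : int := msumP (mdeg p) (fun q => mle q p) (fun q => acoef q *+ binom p q).

Lemma Bsum_even p : p != mi0 m -> ~~ oddc p -> Bsum p = 0.
Proof.
move=> pn op; rewrite /Bsum /msumP (bigD1 (tord (mdeg p) p)) /=; last first.
  by rewrite lowr_tord ?mle_refl // bnd_mdeg.
rewrite lowr_tord ?bnd_mdeg // binom_refl mulr1n.
rewrite {1}/acoef; case E: (mdeg p) => [|k]; first by move: pn; rewrite -mdeg_eq0 E.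
rewrite /= (negbTE pn) (negbTE op) -E.
rewrite addrC; apply/eqP; rewrite subr_eq0; apply/eqP.
rewrite /msumP; apply: eq_big => q.
  by rewrite -(inj_eq (@lowr_inj _ _)) lowr_tord // bnd_mdeg.
move=> /andP[qp qn]; congr (_ *+ _); rewrite /acoef; apply: arec_fuel => //.
rewrite -ltnS -E; apply: mdeg_lt2 => //.
by move: qn; rewrite -(inj_eq (@lowr_inj _ _)) lowr_tord // bnd_mdeg.
Qed.

Definition supp p := [set i | p i != 0%N].

Lemma supp_mle q p : mle q p -> (#|supp q| <= #|supp p|)%N.
Proof.
move=> /mleP qp; apply: subset_leq_card; apply/subsetP=> i; rewrite !inE.
by rewrite -!lt0n => h; apply: leq_trans h (qp i).
Qed.

Lemma Bsum_supp1 p : (#|supp p| <= 1)%N -> Bsum p = 1.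
Proof.
move=> sp; rewrite /Bsum /msumP (bigD1 (tord (mdeg p) (mi0 m))) /=; last first.
  by rewrite lowr_tord ?mle0 //; exact/bnd_mle/bnd_mdeg/mle0.
have l0 : lowr (tord (mdeg p) (mi0 m)) = mi0 m.
  by rewrite lowr_tord //; exact/bnd_mle/bnd_mdeg/mle0.
rewrite l0 acoef0 binom0 big1 ?addr0 // => q /andP[qp qn].
rewrite acoef_odd ?mul0rn //.
  by rewrite -l0 (inj_eq (@lowr_inj _ _)).
by rewrite /oddc (leq_trans (supp_mle qp)).
Qed.

End ACoef.

Section AC.
Variable m : nat.
Implicit Types (p q r s : mi m).

Lemma fact_inv0 : fact_inv (mi0 m) = 1.
Proof. by rewrite /fact_inv big1 ?invr1 // => i _; rewrite ffunE. Qed.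

Lemma numerE p : numer p =
  (if ~~ odd (mdeg p) && (#|supp p| <= 1)%N then fact_inv p else 0)%:P.
Proof.
rewrite /numer /fps_const; case: (boolP (p == mi0 m)) => [/eqP ->|pn].
  rewrite mdeg0 /=.
  have -> : #|supp (mi0 m)| = 0%N.
    by apply: eq_card0 => i; rewrite inE ffunE eqxx.
  rewrite /= (eq_bigr (fun _ => 1)); last first.
    move=> i _; rewrite /cosh_var.
    have -> : [forall j, (j != i) ==> (mi0 m j == 0%N)] by apply/forallP=> j; rewrite ffunE eqxx implybT.
    by rewrite ffunE /= fact_inv0.
  by rewrite sumr_const card_ord fact_inv0 polyCB polyC1 polyC_natr subrK.
rewrite add0r.
case: (boolP (#|supp p| <= 1)%N) => sp.
  have : (0 < #|supp p|)%N.
    rewrite card_gt0; apply/set0Pn; move: pn; rewrite -mdeg_eq0 /mdeg sum_nat_eq0.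
    by move=> /forallPn[i]; rewrite implyTb => h; exists i; rewrite inE.
  move=> sp0; have /cards1P[i0 si0] : #|supp p| == 1%N by rewrite eqn_leq sp sp0.
  have pz j : j != i0 -> p j = 0%N.
    move=> ji; apply/eqP; apply: contraNT ji => h.
    have : j \in supp p by rewrite inE.
    by rewrite si0 inE.
  have md : mdeg p = p i0.
    by rewrite /mdeg (bigD1 i0) //= big1 ?addn0 // => j /pz.
  rewrite (bigD1 i0) //= big1 ?addr0; last first.
    move=> i ni; rewrite /cosh_var.
    suff -> : [forall j, (j != i) ==> (p j == 0%N)] = false by [].
    apply/negbTE/forallPn; exists i0; rewrite eq_sym ni /=.
    have : i0 \in supp p by rewrite si0 inE.
    by rewrite inE.
  rewrite /cosh_var andbT md.
  have -> : [forall j, (j != i0) ==> (p j == 0%N)].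
    by apply/forallP=> j; apply/implyP=> /pz ->.
  by case: (odd (p i0)).
rewrite andbF big1 // => i _; rewrite /cosh_var.
suff -> : [forall j, (j != i) ==> (p j == 0%N)] = false by [].
apply/negbTE/forallPn.
have [j1 [j2 [j12 sub]]] : exists j1 j2, j1 != j2 /\ [set j1; j2] \subset supp p.
  move: sp; rewrite -ltnNge => /card_gt1P [j1 [j2 [h1 h2 h12]]].
  exists j1, j2; split => //; apply/subsetP=> k; rewrite !inE => /orP[]/eqP ->;
    [move: h1 | move: h2]; by rewrite inE.
case: (boolP (j1 == i)) => [/eqP e1|n1].
  exists j2; rewrite -e1 eq_sym j12 /=.
  by have := subsetP sub j2; rewrite !inE eqxx orbT => /(_ isT).
exists j1; rewrite n1 /=.
by have := subsetP sub j1; rewrite !inE eqxx => /(_ isT).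
Qed.

Lemma fact_inv_mul p q : mle q p ->
  fact_inv q * fact_inv (misub p q) = (binom p q)%:R * fact_inv p.
Proof.
move=> /mleP qp.
have e : (binom p q * ((\prod_i (q i)`!) * (\prod_i (misub p q i)`!)))%N = (\prod_i (p i)`!)%N.
  rewrite /binom -!big_split /=; apply: eq_bigr => i _.
  by rewrite misubE bin_fact.
rewrite /fact_inv -invfM -natrM -e [in RHS]natrM [in RHS]invfM mulrA mulfV ?mul1r //.
rewrite pnatr_eq0 -lt0n /binom prodn_gt0 // => i; rewrite bin_gt0; exact: qp.
Qed.

Definition Acoef q : {poly rat} := ((acoef q)%:~R * fact_inv q)%:P.

Lemma intrMn (x : int) n : (x *+ n)%:~R = (x%:~R : rat) * n%:R.
Proof.
elim: n => [|n IH]; first by rewrite !mulr0n mulr0.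
by rewrite !mulrS intrD IH mulrDr mulr1.
Qed.

Lemma AC_term p q : mle q p -> Acoef q * cosh_sum (misub p q) =
  (if ~~ odd (mdeg p) then (acoef q *+ binom p q)%:~R * fact_inv p else 0)%:P.
Proof.
move=> qp; rewrite /cosh_sum.
have md : mdeg (misub p q) = (mdeg p - mdeg q)%N by rewrite -(mdeg_misub qp) addnK.
have le : (mdeg q <= mdeg p)%N by rewrite -(mdeg_misub qp) leq_addl.
rewrite md oddB //.
case: (boolP (odd (mdeg q))) => oq.
  have qn : q != mi0 m by apply: contraTneq oq => ->; rewrite mdeg0.
  rewrite /Acoef acoef_odd //; last by rewrite /oddc oq orbT.
  by rewrite mul0r polyC0 mul0r mul0rn mul0r; case: ifP; rewrite ?polyC0.
rewrite addbF; case: (odd (mdeg p)) => /=; first by rewrite mulr0 polyC0.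
by rewrite /Acoef -polyCM -mulrA fact_inv_mul // intrMn mulrA.
Qed.

Lemma msum_polyC n (P : pred (mi m)) (F : mi m -> rat) :
  msumP n P (fun x => (F x)%:P) = (msumP n P F)%:P.
Proof. by rewrite /msumP (big_morph _ (@polyCD _) (@polyC0 _)). Qed.

Lemma msum_intr n (P : pred (mi m)) (F : mi m -> int) :
  msumP n P (fun x => ((F x)%:~R : rat)) = (msumP n P F)%:~R.
Proof. by rewrite /msumP (big_morph _ (@intrD _) (mulr0z 1)). Qed.

Lemma AC_lemma p : fps_mul (@Acoef) (@cosh_sum m) p = numer p.
Proof.
rewrite fps_mulE.
transitivity (msumP (mdeg p) (fun q => mle q p) (fun q =>
  (if ~~ odd (mdeg p) then (acoef q *+ binom p q)%:~R * fact_inv p else 0)%:P)).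
  by apply: eq_msum => q qp; exact: AC_term.
rewrite msum_polyC numerE; congr (_%:P).
case: (boolP (odd (mdeg p))) => op /=.
  by rewrite /msumP big1.
rewrite /msumP -big_distrl /=.
rewrite -(big_morph _ (@intrD _) (mulr0z 1)).
change (\sum_(i | mle (lowr i) p) (acoef (lowr i) *+ binom p (lowr i))) with (Bsum p).
case: (boolP (#|supp p| <= 1)%N) => sp; first by rewrite Bsum_supp1 // mul1r.
rewrite Bsum_even ?mul0r //.
  apply: contra sp => /eqP ->; apply: leq_trans (_ : 0 <= 1)%N => //.
  by rewrite leqn0 cards_eq0; apply/eqP/setP=> i; rewrite !inE ffunE eqxx.
by rewrite /oddc (negbTE op) orbF.
Qed.

End AC.


Section Final.
Variable m : nat.
Implicit Types (p q r s : mi m).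

Lemma msum_reflect (R : zmodType) p (F : mi m -> R) :
  msumP (mdeg p) (fun q => mle q p) F =
  msumP (mdeg p) (fun q => mle q p) (fun r => F (misub p r)).
Proof.
have bp := bnd_mdeg p.
have inv r : mle r p -> misub p (misub p r) = r.
  by move=> /mleP rp; apply/ffunP=> i; rewrite !misubE subKn // rp.
have mle_sub r : mle (misub p r) p by apply/mleP=> i; rewrite misubE leq_subr.
symmetry; apply: (@msumP_bij m R (mdeg p) (mdeg p) (fun q => mle q p) (fun q => mle q p) (misub p) (misub p) F) => //.
- by move=> x xp; exact: bnd_mle xp bp.
- by move=> x xp; exact: bnd_mle xp bp.
Qed.

Lemma lhsE p : lhs p = fps_mul (@exp_tX m) (@Acoef m) p.
Proof.
rewrite /lhs /sa_poly.
have cT : #|{: Kvert p}| = mdeg p by rewrite -cardsT card_sizes sizes_setT.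
rewrite cT.
under eq_bigr do rewrite sa_acoef card_sizes.
rewrite (eq_bigl (fun S : {set Kvert p} => S \subset setT)); last by move=> S; rewrite subsetT.
rewrite (CL setT (fun r => (acoef r)%:~R *: 'X^(mdeg p - mdeg r) : {poly rat})) sizes_setT.
rewrite fps_mulE [RHS]msum_reflect /msumP scaler_sumr; apply: eq_bigr => q qp.
set r := lowr q.
have rp : mle r p by [].
have -> : misub p (misub p r) = r.
  by move/mleP: rp => rp; apply/ffunP=> i; rewrite !misubE subKn // rp.
have md : mdeg (misub p r) = (mdeg p - mdeg r)%N by rewrite -(mdeg_misub rp) addnK.
rewrite /exp_tX /Acoef md mulrC mul_polyC scalerA -scaler_nat !scalerA.
congr (_ *: _).
rewrite -[RHS]mulrA fact_inv_mul //.
ring.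
Qed.

Lemma fps_mul_congr (R : pzRingType) (f1 f2 g1 g2 : mi m -> R) p :
  (forall x, f1 x = f2 x) -> (forall x, g1 x = g2 x) -> fps_mul f1 g1 p = fps_mul f2 g2 p.
Proof. by move=> ef eg; apply: eq_bigr => q _; rewrite ef eg. Qed.

Lemma cosh_sum0 : @cosh_sum m (mi0 m) = 1.
Proof. by rewrite /cosh_sum mdeg0 /= fact_inv0. Qed.

End Final.

Theorem mainTheorem9 (m : nat) (hm : (1 <= m)%N) (p : {ffun 'I_m -> nat}) :
  lhs p = rhs p.
Proof.
rewrite lhsE /rhs.
transitivity (fps_mul (fps_mul (@exp_tX m) (@Acoef m)) (fps_mul (@cosh_sum m) (fps_inv (@cosh_sum m))) p).
  symmetry.
  rewrite (@fps_mul_congr m _ (fps_mul (@exp_tX m) (@Acoef m)) (fps_mul (@exp_tX m) (@Acoef m))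
     (fps_mul (@cosh_sum m) (fps_inv (@cosh_sum m))) (fps_const 1)) //; first exact: fps_mul1.
  by move=> x; rewrite fps_invP // cosh_sum0.
rewrite -fps_mulA; apply: fps_mul_congr => // x.
rewrite fps_mulA; apply: fps_mul_congr => // y.
by rewrite AC_lemma.
Qed.
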